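(* Let $s>0$ be an integer, $K$ a field, and $A=K[[XY^i\mid 0\le i\le 2s+1]]\subseteq K[[X,Y]]$ (a two-dimensional Cohen--Macaulay local normal domain). Set $I=(XY^i\mid 0\le i\le s)+(XY^{2s+1})$ and $Q=(X,XY^{2s+1})$. Then: (a) $I^2\subseteq Q$ and $\ell_A(I^2/QI)=s$; in particular $\mathcal{G}(I)$ is not Cohen--Macaulay; (b) $I^3=QI^2$; (c) $\ell_A(A/I^{n+1})=(2s+1)\binom{n+2}{2}-2s\binom{n+1}{1}+s$ for all $n\ge0$; (d) $\operatorname{depth}\mathcal{G}(I)=1$.
   Context: $\mathcal{G}(I)=\bigoplus_{n\ge0}I^n/I^{n+1}$ is the associated graded ring of $I$. *)

(* Defs.v *)
From mathcomp Require Import all_boot all_order all_algebra.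
Set Implicit Arguments. Unset Strict Implicit. Unset Printing Implicit Defensive.
Import GRing.Theory.
Local Open Scope ring_scope.

Section PowerSeries.
Variable K : fieldType.

(* formal power series in X, Y: f a b = coefficient of X^a Y^b *)
Definition ps := nat -> nat -> K.
Definition ps0 : ps := fun _ _ => 0.
Definition ps1 : ps := fun a b => if (a == 0%N) && (b == 0%N) then 1 else 0.
Definition psadd (f g : ps) : ps := fun a b => f a b + g a b.
Definition psopp (f : ps) : ps := fun a b => - f a b.
Definition psmul (f g : ps) : ps := fun a b =>
  \sum_(i < a.+1) \sum_(j < b.+1) f i j * g (a - i)%N (b - j)%N.
Definition XY (i : nat) : ps := fun a b => if (a == 1%N) && (b == i) then 1 else 0.

Definition psum (n : nat) (F : nat -> ps) : ps := \big[psadd/ps0]_(k < n) F k.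

Variable s : nat.

(* (a,b) lies in the monoid generated by the exponents (1,i), 0 <= i <= 2s+1 *)
Definition inS (a b : nat) : Prop :=
  exists l : seq nat, all (fun i => i <= 2 * s + 1)%N l /\ size l = a /\ sumn l = b.

Definition inA (f : ps) : Prop := forall a b, f a b != 0 -> inS a b.

Definition genA (n : nat) (g : nat -> ps) (f : ps) : Prop :=
  exists c : nat -> ps, (forall k, inA (c k)) /\ f = psum n (fun k => psmul (c k) (g k)).

Definition prodI (I J : ps -> Prop) (f : ps) : Prop :=
  exists n (x y : nat -> ps), (forall k, (k < n)%N -> I (x k) /\ J (y k)) /\
    f = psum n (fun k => psmul (x k) (y k)).

Fixpoint powI (I : ps -> Prop) (n : nat) : ps -> Prop :=
  match n with 0 => inA | m.+1 => prodI (powI I m) I end.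

Definition isIdealA (J : ps -> Prop) : Prop :=
  (forall f, J f -> inA f) /\ J ps0 /\ (forall f g, J f -> J g -> J (psadd f g)) /\
  (forall a f, inA a -> J f -> J (psmul a f)).

Definition sameP {T} (P R : T -> Prop) := forall x, P x <-> R x.
Definition strictsub {T} (P R : T -> Prop) :=
  (forall x, P x -> R x) /\ exists x, R x /\ ~ P x.

Definition chainA (M N : ps -> Prop) (l : nat) (J : nat -> ps -> Prop) : Prop :=
  sameP (J 0%N) M /\ sameP (J l) N /\ (forall k, (k <= l)%N -> isIdealA (J k)) /\
  (forall k, (k < l)%N -> strictsub (J k) (J k.+1)).

Definition lenA (M N : ps -> Prop) (l : nat) : Prop :=
  (exists J, chainA M N l J) /\ (forall m J, chainA M N m J -> (m <= l)%N).

Definition inm (f : ps) : Prop := inA f /\ f 0%N 0%N = 0.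

Variable I : ps -> Prop.

(* representatives: g n is a representative of the degree n component *)
Definition grr := nat -> ps.
Definition Gel (g : grr) : Prop :=
  (forall n, powI I n (g n)) /\ exists N, forall n, (N <= n)%N -> powI I n.+1 (g n).
Definition geq (g h : grr) : Prop := forall n, powI I n.+1 (psadd (g n) (psopp (h n))).
Definition gzero : grr := fun _ => ps0.
Definition gone : grr := fun n => if n == 0%N then ps1 else ps0.
Definition gadd (g h : grr) : grr := fun n => psadd (g n) (h n).
Definition gmul (g h : grr) : grr := fun n =>
  \big[psadd/ps0]_(i < n.+1) psmul (g i) (h (n - i)%N).
Definition gsum (n : nat) (F : nat -> grr) : grr := \big[gadd/gzero]_(k < n) F k.

(* homogeneous maximal ideal  M = m/I (+) G_+ *)
Definition Gmax (g : grr) : Prop := Gel g /\ inm (g 0%N).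

Definition isIdealG (P : grr -> Prop) : Prop :=
  (forall g, P g -> Gel g) /\ (forall g h, P g -> Gel h -> geq g h -> P h) /\
  P gzero /\ (forall g h, P g -> P h -> P (gadd g h)) /\
  (forall a g, Gel a -> P g -> P (gmul a g)).

Definition genG (n : nat) (x : nat -> grr) (h : grr) : Prop :=
  Gel h /\ exists c : nat -> grr, (forall k, (k < n)%N -> Gel (c k)) /\
    geq h (gsum n (fun k => gmul (c k) (x k))).

Definition regG (n : nat) (x : nat -> grr) : Prop :=
  (forall k, (k < n)%N -> Gmax (x k)) /\
  (forall k, (k < n)%N -> forall y, Gel y -> genG k x (gmul (x k) y) -> genG k x y) /\
  ~ genG n x gone.

Definition depthG (d : nat) : Prop :=
  (exists x, regG d x) /\ (forall n x, regG n x -> (n <= d)%N).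

Definition isPrimeG (P : grr -> Prop) : Prop :=
  isIdealG P /\ ~ P gone /\
  (forall g h, Gel g -> Gel h -> P (gmul g h) -> P g \/ P h).

Definition chainG (d : nat) (P : nat -> grr -> Prop) : Prop :=
  (forall k, (k <= d)%N -> isPrimeG (P k)) /\
  (forall k, (k < d)%N -> strictsub (P k) (P k.+1)).

Definition dimG (d : nat) : Prop :=
  (exists P, chainG d P) /\ (forall e P, chainG e P -> (e <= d)%N).

Definition CMG : Prop := exists d, depthG d /\ dimG d.

End PowerSeries.

Definition Igens (K : fieldType) (s : nat) (k : nat) : ps K :=
  if (k <= s)%N then XY K k else XY K (2 * s + 1).
Definition Iid (K : fieldType) (s : nat) : ps K -> Prop := genA s (s.+2) (Igens K s).
Definition Qgens (K : fieldType) (s : nat) (k : nat) : ps K :=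
  if k == 0%N then XY K 0 else XY K (2 * s + 1).
Definition Qid (K : fieldType) (s : nat) : ps K -> Prop := genA s 2 (Qgens K s).
Arguments Iid : clear implicits.
Arguments Qid : clear implicits.

(* Main.v *)
Require Import Defs.
From mathcomp Require Import all_boot all_order all_algebra zify.
From Stdlib Require Import FunctionalExtensionality IndefiniteDescription.
Set Implicit Arguments. Unset Strict Implicit. Unset Printing Implicit Defensive.
Import GRing.Theory.
Local Open Scope ring_scope.


Section Basic.
Variable K : fieldType.
Implicit Types f g h : ps K.

Lemma bigps_eval (I : Type) (r : seq I) (P : pred I) (F : I -> ps K) a b :
  (\big[@psadd K/@ps0 K]_(i <- r | P i) F i) a b = \sum_(i <- r | P i) F i a b.
Proof.
by rewrite (big_morph (fun f : ps K => f a b) (id1 := 0) (op1 := +%R)).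
Qed.

Lemma psum_eval n (F : nat -> ps K) a b : psum n F a b = \sum_(k < n) F k a b.
Proof. by rewrite /psum bigps_eval. Qed.

Lemma gsum_eval n (F : nat -> grr K) m a b : gsum n F m a b = \sum_(k < n) F k m a b.
Proof.
rewrite /gsum (big_morph (fun f : grr K => f m a b) (id1 := 0) (op1 := +%R)) //.
Qed.

Lemma sum_delta (m k : nat) (F : nat -> K) :
  \sum_(i < m) (if (i == k :> nat) then F i else 0) = if (k < m)%N then F k else 0.
Proof.
case: (ltnP k m) => H.
  rewrite (bigD1 (Ordinal H)) //= eqxx big1 ?addr0 // => i Hi.
  case: eqP => // E; case/eqP: Hi; exact: val_inj.
by rewrite big1 // => i _; case: eqP => // E; move: (ltn_ord i); rewrite E ltnNge H.
Qed.

Lemma sum_neq0 (n : nat) (F : 'I_n -> K) : \sum_(i < n) F i != 0 -> exists i, F i != 0.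
Proof.
move=> H; have [i Hi|H0] := pickP (fun i : 'I_n => F i != 0); first by exists i.
by case/eqP: H; apply: big1 => i _; move: (H0 i) => /negbFE/eqP.
Qed.

Definition fp (p : {poly {poly K}}) : ps K := fun i j => p`_i`_j.
Definition trP (N : nat) f : {poly {poly K}} := \poly_(i < N) \poly_(j < N) f i j.

Lemma fp_trP N f i j : (i < N)%N -> (j < N)%N -> fp (trP N f) i j = f i j.
Proof. by move=> Hi Hj; rewrite /fp /trP coef_poly Hi coef_poly Hj. Qed.

Lemma psmul_fp p q : psmul (fp p) (fp q) = fp (p * q).
Proof.
apply: functional_extensionality => a; apply: functional_extensionality => b.
rewrite /psmul /fp coefM coef_sum; apply: eq_bigr => i _; by rewrite coefM.
Qed.

Lemma psmul_ext f g f' g' a b :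
  (forall i j, (i <= a)%N -> (j <= b)%N -> f i j = f' i j /\ g i j = g' i j) ->
  psmul f g a b = psmul f' g' a b.
Proof.
move=> H; apply: eq_bigr => i _; apply: eq_bigr => j _.
have Hi := ltn_ord i; have Hj := ltn_ord j.
rewrite (proj1 (H i j _ _)) ?(proj2 (H (a - i)%N (b - j)%N _ _)) //; lia.
Qed.

Lemma psmulC f g : psmul f g = psmul g f.
Proof.
apply: functional_extensionality => a; apply: functional_extensionality => b.
pose N := (maxn a b).+1.
rewrite (@psmul_ext f g (fp (trP N f)) (fp (trP N g))); last first.
  by move=> i j Hi Hj; rewrite !fp_trP //; lia.
rewrite [RHS](@psmul_ext g f (fp (trP N g)) (fp (trP N f))); last first.
  by move=> i j Hi Hj; rewrite !fp_trP //; lia.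
by rewrite !psmul_fp mulrC.
Qed.

Lemma psmulA f g h : psmul f (psmul g h) = psmul (psmul f g) h.
Proof.
apply: functional_extensionality => a; apply: functional_extensionality => b.
pose N := (maxn a b).+1.
have E1 : forall i j, (i <= a)%N -> (j <= b)%N ->
   psmul g h i j = psmul (fp (trP N g)) (fp (trP N h)) i j.
  move=> i j Hi Hj; apply: psmul_ext => i' j' Hi' Hj'; rewrite !fp_trP //; lia.
have E2 : forall i j, (i <= a)%N -> (j <= b)%N ->
   psmul f g i j = psmul (fp (trP N f)) (fp (trP N g)) i j.
  move=> i j Hi Hj; apply: psmul_ext => i' j' Hi' Hj'; rewrite !fp_trP //; lia.
rewrite (@psmul_ext f (psmul g h) (fp (trP N f)) (psmul (fp (trP N g)) (fp (trP N h)))); last first.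
  move=> i j Hi Hj; rewrite fp_trP ?E1 //; lia.
rewrite [RHS](@psmul_ext (psmul f g) h (psmul (fp (trP N f)) (fp (trP N g))) (fp (trP N h))); last first.
  move=> i j Hi Hj; rewrite fp_trP ?E2 //; lia.
by rewrite !psmul_fp mulrA.
Qed.

Lemma psmulDl f g h : psmul (psadd f g) h = psadd (psmul f h) (psmul g h).
Proof.
apply: functional_extensionality => a; apply: functional_extensionality => b.
rewrite /psadd /psmul -big_split; apply: eq_bigr => i _.
rewrite -big_split; apply: eq_bigr => j _; by rewrite mulrDl.
Qed.

Lemma psmulNl f h : psmul (psopp f) h = psopp (psmul f h).
Proof.
apply: functional_extensionality => a; apply: functional_extensionality => b.
rewrite /psopp /psmul -sumrN; apply: eq_bigr => i _.
rewrite -sumrN; apply: eq_bigr => j _; by rewrite mulNr.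
Qed.

Lemma psmul0l h : psmul (@ps0 K) h = @ps0 K.
Proof.
apply: functional_extensionality => a; apply: functional_extensionality => b.
by rewrite /psmul /ps0 big1 // => i _; rewrite big1 // => j _; rewrite mul0r.
Qed.

Lemma XY_cond (a b i j t : nat) : (i <= a)%N -> (j <= b)%N ->
  ((a - i == 1) && (b - j == t))%N = [&& (i == a.-1)%N, (j == b - t)%N & (0 < a)%N && (t <= b)%N].
Proof.
move=> Hi Hj; apply/idP/idP.
  move/andP=> [/eqP H1 /eqP H2]; apply/and3P; split; [apply/eqP|apply/eqP|apply/andP;split]; lia.
move/and3P=> [/eqP H1 /eqP H2 /andP [H3 H4]]; apply/andP; split; apply/eqP; lia.
Qed.

Lemma summand (x : K) (a b i j t: nat) : (i <= a)%N -> (j <= b)%N ->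
  x * (if ((a - i == 1) && (b - j == t))%N then 1 else 0) =
  if (i == a.-1)%N then (if (j == b - t)%N then (if (0 < a)%N && (t <= b)%N then x else 0) else 0) else 0.
Proof.
move=> Hi Hj; rewrite XY_cond //.
case: (i == a.-1)%N; case: (j == b - t)%N; case: ((0 < a)%N && (t <= b)%N);
  by rewrite /= ?mulr1 ?mulr0.
Qed.

Lemma psmul_XY f t a b :
  psmul f (XY K t) a b = if (0 < a)%N && (t <= b)%N then f a.-1 (b - t)%N else 0.
Proof.
rewrite /psmul.
transitivity (\sum_(i < a.+1) (if (i == a.-1 :> nat) then
   \sum_(j < b.+1) (if (j == (b - t)%N :> nat) then
       (if (0 < a)%N && (t <= b)%N then f i j else 0) else 0) else 0)).
  apply: eq_bigr => i _; have Hi := ltn_ord i.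
  case: ifP => Ei.
    apply: eq_bigr => j _; have Hj := ltn_ord j; rewrite /XY summand ?Ei //; lia.
  rewrite big1 // => j _; have Hj := ltn_ord j; rewrite /XY summand ?Ei //; lia.
rewrite (@sum_delta a.+1 a.-1 (fun i => \sum_(j < b.+1) (if (j == (b - t)%N :> nat) then
       (if (0 < a)%N && (t <= b)%N then f i j else 0) else 0))).
rewrite (_ : (a.-1 < a.+1)%N = true); last by lia.
rewrite (@sum_delta b.+1 (b - t)%N (fun j => (if (0 < a)%N && (t <= b)%N then f a.-1 j else 0))).
by rewrite (_ : (b - t < b.+1)%N = true); last by lia.
Qed.

Lemma psmul_XYl f t a b :
  psmul (XY K t) f a b = if (0 < a)%N && (t <= b)%N then f a.-1 (b - t)%N else 0.
Proof. by rewrite psmulC psmul_XY. Qed.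

Definition supp f (X : nat -> nat -> bool) := forall a b, f a b != 0 -> X a b.

Lemma supp_psmul f g (X1 X2 X3 : nat -> nat -> bool) : supp f X1 -> supp g X2 ->
  (forall a1 b1 a2 b2, X1 a1 b1 -> X2 a2 b2 -> X3 (a1 + a2)%N (b1 + b2)%N) ->
  supp (psmul f g) X3.
Proof.
move=> Hf Hg H a b /sum_neq0 [i /sum_neq0 [j]].
rewrite mulf_eq0 negb_or => /andP [/Hf H1 /Hg H2].
have := H _ _ _ _ H1 H2; have Hi := ltn_ord i; have Hj := ltn_ord j.
by rewrite !subnKC //; lia.
Qed.

Lemma supp_psadd f g X : supp f X -> supp g X -> supp (psadd f g) X.
Proof.
move=> Hf Hg a b; rewrite /psadd => H.
case Ef: (f a b == 0); last by apply: Hf; rewrite Ef.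
by apply: Hg; move/eqP: Ef H => ->; rewrite add0r.
Qed.

Lemma supp_psopp f X : supp f X -> supp (psopp f) X.
Proof. by move=> Hf a b; rewrite /psopp oppr_eq0; apply: Hf. Qed.

Lemma supp_ps0 X : supp (@ps0 K) X.
Proof. by move=> a b; rewrite /ps0 eqxx. Qed.

Lemma supp_psum n (F : nat -> ps K) X : (forall k, (k < n)%N -> supp (F k) X) -> supp (psum n F) X.
Proof.
move=> H a b; rewrite psum_eval => /sum_neq0 [k Hk]; exact: (H k (ltn_ord k) a b Hk).
Qed.

Lemma supp_sub f (X Y : nat -> nat -> bool) : supp f X -> (forall a b, X a b -> Y a b) -> supp f Y.
Proof. by move=> Hf H a b /Hf /H. Qed.

Lemma supp_XY t : supp (XY K t) (fun a b => (a == 1%N) && (b == t)).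
Proof. by move=> a b; rewrite /XY; case: ifP => //; rewrite eqxx. Qed.

End Basic.


Section Char.
Variable K : fieldType.
Variable s : nat.
Implicit Types f g h : ps K.

Definition Sb (a b : nat) : bool := (b <= (2*s+1)*a)%N.
Definition Mon (n a b : nat) : bool := ((b <= (2*s+1)*a) &&
  ((n < a) || ((a == n) && ((b + s < (2*s+1)*n) || (b == (2*s+1)*n)))))%N.
Definition MonQ (a b : nat) : bool := ((b <= (2*s+1)*a) &&
  ((1 < a) || ((a == 1) && ((b == 0) || (b == 2*s+1)))))%N.
Definition MonQI (a b : nat) : bool := ((b <= (2*s+1)*a) &&
  ((2 < a) || ((a == 2) && ((b <= s) || ((2*s+1 <= b) && (b <= 3*s+1)) || (b == 4*s+2)))))%N.

Lemma inS_iff a b : inS s a b <-> Sb a b.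
Proof.
rewrite /Sb; split.
  move=> [l [Hl [<- <-]]]; elim: l Hl => //= i l IH /andP [Hi Hl].
  have := IH Hl; lia.
elim: a b => [|a IH] b Hb.
  exists [::]; split => //=; split => //; lia.
have [l [Hl [Hs Hsum]]] := IH (b - minn b (2*s+1))%N ltac:(lia).
exists (minn b (2*s+1) :: l); split; first by rewrite /= Hl andbT; lia.
split; first by rewrite /= Hs.
rewrite /= Hsum; lia.
Qed.

Lemma inA_iff f : inA s f <-> supp f Sb.
Proof. by split => H a b /H /inS_iff. Qed.

Lemma supp_Sb f X : supp f X -> (forall a b, X a b -> Sb a b) -> inA s f.
Proof. by move=> H1 H2; apply/inA_iff; apply: supp_sub H1 H2. Qed.

Lemma decomp m (t : nat -> nat) (j : nat -> nat -> nat) (X Y : nat -> nat -> bool) f :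
  (forall a b, X a b -> [/\ (j a b < m)%N, (0 < a)%N, (t (j a b) <= b)%N & Y a.-1 (b - t (j a b))%N]) ->
  supp f X ->
  exists c : nat -> ps K, (forall k, supp (c k) Y) /\ f = psum m (fun k => psmul (c k) (XY K (t k))).
Proof.
move=> Hj Hf.
exists (fun k a' b' => if (j a'.+1 (b' + t k)%N == k)%N then f a'.+1 (b' + t k)%N else 0).
split.
  move=> k a' b'; case: ifP => [/eqP E|_]; last by rewrite eqxx.
  move/Hf/Hj => [_ _ _]; by rewrite E addnK.
apply: functional_extensionality => a; apply: functional_extensionality => b.
rewrite psum_eval.
case Ef: (f a b == 0).
  rewrite (eqP Ef) big1 // => k _; rewrite psmul_XY.
  case: ifP => // /andP [Ha Hb]; rewrite prednK // subnK //.
  by case: ifP => //; rewrite (eqP Ef).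
have [H1 H2 H3 H4] := Hj a b (Hf a b (negbT Ef)).
transitivity (\sum_(k < m) (if (k == j a b :> nat) then f a b else 0)).
  by rewrite (@sum_delta K m (j a b) (fun _ => f a b)) H1.
apply: eq_bigr => k _; rewrite psmul_XY.
case: eqP => [->|Hk].
  by rewrite H2 H3 /= prednK // subnK // eqxx.
case: ifP => // /andP [Ha Hb]; rewrite prednK // subnK //.
by case: eqP => // E; case: Hk.
Qed.

Lemma genA_char m (t : nat -> nat) (j : nat -> nat -> nat) (X : nat -> nat -> bool) f :
  (forall k a b, (k < m)%N -> Sb a b -> X (a + 1)%N (b + t k)%N) ->
  (forall a b, X a b -> [/\ (j a b < m)%N, (0 < a)%N, (t (j a b) <= b)%N & Sb a.-1 (b - t (j a b))%N]) ->
  genA s m (fun k => XY K (t k)) f <-> supp f X.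
Proof.
move=> H1 H2; split.
  move=> [c [Hc ->]]; apply: supp_psum => k Hk.
  apply: (supp_psmul (proj1 (inA_iff _) (Hc k)) (@supp_XY K (t k))).
  by move=> a1 b1 a2 b2 Hs /andP [/eqP -> /eqP ->]; apply: H1.
move=> Hf; have [c [Hc ->]] := decomp H2 Hf.
by exists c; split => // k; apply/inA_iff.
Qed.

Lemma prodI_charA (P R : ps K -> Prop) (XP XR X : nat -> nat -> bool) m t j f :
  (forall g, P g <-> supp g XP) -> (forall g, R g <-> supp g XR) ->
  (forall a1 b1 a2 b2, XP a1 b1 -> XR a2 b2 -> X (a1 + a2)%N (b1 + b2)%N) ->
  (forall k, (k < m)%N -> supp (XY K (t k)) XR) ->
  (forall a b, X a b -> [/\ (j a b < m)%N, (0 < a)%N, (t (j a b) <= b)%N & XP a.-1 (b - t (j a b))%N]) ->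
  prodI P R f <-> supp f X.
Proof.
move=> HP HR HX Hg Hj; split.
  move=> [n [x [y [Hxy ->]]]]; apply: supp_psum => k Hk.
  have [/HP Hx /HR Hy] := Hxy k Hk; exact: supp_psmul Hx Hy HX.
move=> Hf; have [c [Hc E]] := decomp Hj Hf.
exists m, c, (fun k => XY K (t k)); split => //.
move=> k Hk; split; [apply/HP | apply/HR]; by [apply: Hc | apply: Hg].
Qed.

Lemma prodI_charB (P R : ps K -> Prop) (XP XR X : nat -> nat -> bool) m t j f :
  (forall g, P g <-> supp g XP) -> (forall g, R g <-> supp g XR) ->
  (forall a1 b1 a2 b2, XP a1 b1 -> XR a2 b2 -> X (a1 + a2)%N (b1 + b2)%N) ->
  (forall k, (k < m)%N -> supp (XY K (t k)) XP) ->
  (forall a b, X a b -> [/\ (j a b < m)%N, (0 < a)%N, (t (j a b) <= b)%N & XR a.-1 (b - t (j a b))%N]) ->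
  prodI P R f <-> supp f X.
Proof.
move=> HP HR HX Hg Hj; split.
  move=> [n [x [y [Hxy ->]]]]; apply: supp_psum => k Hk.
  have [/HP Hx /HR Hy] := Hxy k Hk; exact: supp_psmul Hx Hy HX.
move=> Hf; have [c [Hc E]] := decomp Hj Hf.
exists m, (fun k => XY K (t k)), c; split.
  move=> k Hk; split; [apply/HP | apply/HR]; by [apply: Hg | apply: Hc].
rewrite E; congr psum; apply: functional_extensionality => k; exact: psmulC.
Qed.

Definition tI (k : nat) : nat := if (k <= s)%N then k else (2*s+1)%N.
Definition jI (a b : nat) : nat := if (b <= s)%N then b else if (b <= 2*s)%N then s else s.+1.
Definition tQ (k : nat) : nat := if (k == 0)%N then 0%N else (2*s+1)%N.
Definition jQ (a b : nat) : nat := if (2*s+1 <= b)%N then 1%N else 0%N.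

Lemma Igens_E : Igens K s = fun k => XY K (tI k).
Proof. by apply: functional_extensionality => k; rewrite /Igens /tI; case: ifP. Qed.
Lemma Qgens_E : Qgens K s = fun k => XY K (tQ k).
Proof. by apply: functional_extensionality => k; rewrite /Qgens /tQ; case: ifP. Qed.

Lemma tI_jI a b : tI (jI a b) = if (b <= s)%N then b else if (b <= 2*s)%N then s else (2*s+1)%N.
Proof.
rewrite /tI /jI; repeat case: ifP; lia.
Qed.

Lemma tQ_jQ a b : tQ (jQ a b) = if (2*s+1 <= b)%N then (2*s+1)%N else 0%N.
Proof. rewrite /tQ /jQ; repeat case: ifP; lia. Qed.

Lemma Mon0 a b : Mon 0 a b = Sb a b.
Proof. rewrite /Mon /Sb; apply/idP/idP; [move/andP=> [] //| move=> H; apply/andP; split => //; lia]. Qed.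

Lemma MonD n m a1 b1 a2 b2 : Mon n a1 b1 -> Mon m a2 b2 -> Mon (n + m) (a1 + a2) (b1 + b2).
Proof. rewrite /Mon; nia. Qed.

Lemma Mon_Sb n a b : Mon n a b -> Sb a b.
Proof. by rewrite /Mon /Sb => /andP []. Qed.

Lemma I_char f : Iid K s f <-> supp f (Mon 1).
Proof.
rewrite /Iid Igens_E; apply: (genA_char (j := jI)).
  move=> k a b Hk; rewrite /Sb /Mon /tI; case: ifP; nia.
move=> a b; rewrite tI_jI /Mon /Sb /jI => H; split; repeat case: ifP; nia.
Qed.

Lemma powI_char n f : powI s (Iid K s) n f <-> supp f (Mon n).
Proof.
elim: n f => [|n IH] f /=.
  rewrite inA_iff; split => H; apply: supp_sub H _ => a b; by rewrite Mon0.
apply: (prodI_charA (XP := Mon n) (XR := Mon 1) (t := tI) (j := jI) (m := s.+2)).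
- exact: IH.
- exact: I_char.
- move=> a1 b1 a2 b2 H1 H2; rewrite -addn1; exact: MonD.
- move=> k Hk; apply: supp_sub (@supp_XY K _) _ => a b /andP [/eqP -> /eqP ->].
  rewrite /Mon /tI; case: ifP; nia.
- move=> a b; rewrite tI_jI /Mon /jI => H; split; repeat case: ifP; nia.
Qed.

Lemma Q_char f : Qid K s f <-> supp f MonQ.
Proof.
rewrite /Qid Qgens_E; apply: (genA_char (j := jQ)).
  move=> k a b Hk; rewrite /Sb /MonQ /tQ; case: ifP; nia.
move=> a b; rewrite tQ_jQ /MonQ /Sb /jQ => H; split; repeat case: ifP; nia.
Qed.

Lemma QI_char f : prodI (Qid K s) (Iid K s) f <-> supp f MonQI.
Proof.
apply: (prodI_charB (XP := MonQ) (XR := Mon 1) (t := tQ) (j := jQ) (m := 2%N)).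
- exact: Q_char.
- exact: I_char.
- move=> a1 b1 a2 b2; rewrite /MonQ /Mon /MonQI; nia.
- move=> k Hk; apply: supp_sub (@supp_XY K _) _ => a b /andP [/eqP -> /eqP ->].
  rewrite /MonQ /tQ; case: ifP; nia.
- move=> a b; rewrite tQ_jQ /MonQI /Mon /jQ => H; split; repeat case: ifP; nia.
Qed.

Lemma QI2_char f : prodI (Qid K s) (powI s (Iid K s) 2) f <-> supp f (Mon 3).
Proof.
apply: (prodI_charB (XP := MonQ) (XR := Mon 2) (t := tQ) (j := jQ) (m := 2%N)).
- exact: Q_char.
- exact: powI_char.
- move=> a1 b1 a2 b2; rewrite /MonQ /Mon; nia.
- move=> k Hk; apply: supp_sub (@supp_XY K _) _ => a b /andP [/eqP -> /eqP ->].
  rewrite /MonQ /tQ; case: ifP; nia.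
- move=> a b; rewrite tQ_jQ /Mon /jQ => H; split; repeat case: ifP; nia.
Qed.

End Char.


Section Len.
Variable K : fieldType.
Variable s : nat.
Implicit Types f g h : ps K.

Definition cst (c : K) : ps K := fun a b => if (a == 0%N) && (b == 0%N) then c else 0.
Definition mono (p : nat * nat) : ps K := fun a b => if (a == p.1) && (b == p.2) then 1 else 0.

Lemma psmul_cst c f a b : psmul (cst c) f a b = c * f a b.
Proof.
rewrite /psmul /= big_ord_recl.
rewrite [X in _ + X](_ : _ = 0); last first.
  apply: big1 => i _; apply: big1 => j _; rewrite /cst; case: andP => [[H1 H2]|_]; last by rewrite mul0r.
  by move: H1; rewrite /= /bump.
rewrite addr0 big_ord_recl.
rewrite [X in _ + X](_ : _ = 0); last first.
  apply: big1 => j _; rewrite /cst; case: andP => [[H1 H2]|_]; last by rewrite mul0r.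
  by move: H2; rewrite /= /bump.
by rewrite addr0 /cst /= !subn0.
Qed.

Lemma cst_inA c : inA s (cst c).
Proof.
apply: (@supp_Sb K s _ (fun a b => (a == 0%N) && (b == 0%N))).
  by move=> a b; rewrite /cst; case: ifP => //; rewrite eqxx.
by move=> a b /andP [/eqP -> /eqP ->].
Qed.

Lemma cst0 : cst 0 = @ps0 K.
Proof. apply: functional_extensionality => a; apply: functional_extensionality => b; rewrite /cst /ps0; by case: ifP. Qed.

Lemma isIdeal_big (J : ps K -> Prop) (I : Type) (r : seq I) (P : pred I) (F : I -> ps K) :
  isIdealA s J -> (forall i, P i -> J (F i)) -> J (\big[@psadd K/@ps0 K]_(i <- r | P i) F i).
Proof. move=> [_ [H0 [Hadd _]]] HF; exact: (big_ind J H0 Hadd HF). Qed.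

Definition ordered (D : seq (nat * nat)) :=
  forall x y, x \in D -> y \in D -> (x.1 < y.1)%N -> (index y D < index x D)%N.

Lemma lenA_mono (M N : ps K -> Prop) (XM XN : nat -> nat -> bool) (D : seq (nat * nat)) :
  (forall f, M f <-> supp f XM) -> (forall f, N f <-> supp f XN) ->
  (forall a b, XN a b -> Sb s a b) -> (forall a b, XM a b -> XN a b) ->
  (forall a b a' b', XM a b -> Sb s a' b' -> XM (a + a')%N (b + b')%N) ->
  (forall a b a' b', XN a b -> Sb s a' b' -> XN (a + a')%N (b + b')%N) ->
  uniq D -> (forall p, (p \in D) = XN p.1 p.2 && ~~ XM p.1 p.2) -> ordered D ->
  lenA s M N (size D).
Proof.
move=> HM HN HNS HMN HMup HNup Du HD Hord.
pose Jset k a b := XM a b || ((a, b) \in take k D).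
pose J k f := supp f (Jset k).
have HJ : forall k, isIdealA s (J k).
  move=> k; split.
    move=> f Hf; apply: (supp_Sb Hf) => a b /orP [/HMN/HNS // | /mem_take].
    by rewrite HD /= => /andP [/HNS].
  split; first exact: supp_ps0.
  split; first by move=> f g; exact: supp_psadd.
  move=> a f /inA_iff Ha Hf; apply: (supp_psmul Ha Hf) => a1 b1 a2 b2 H1 /orP [H2|H2].
    by apply/orP; left; rewrite addnC (addnC b1); exact: HMup H2 H1.
  case: (posnP a1) => [Ea1|Pa1].
    move: H1; rewrite /Sb Ea1 muln0 leqn0 => /eqP ->; rewrite !add0n; apply/orP; by right.
  have H2D := mem_take H2.
  have HpN : XN (a1 + a2)%N (b1 + b2)%N.
    rewrite addnC (addnC b1); apply: HNup H1; by move: H2D; rewrite HD => /andP [].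
  case HXM: (XM (a1 + a2)%N (b1 + b2)%N); first by rewrite /Jset HXM.
  have HpD : ((a1 + a2)%N, (b1 + b2)%N) \in D by rewrite HD /= HpN HXM.
  apply/orP; right; rewrite in_take //.
  have := Hord _ _ H2D HpD; rewrite /= => /(_ ltac:(lia)).
  move: H2; rewrite in_take //; lia.
split.
  exists J; split.
    move=> f; rewrite /J /Jset take0 (HM f); split => HH; apply: (supp_sub HH) => a b; by rewrite in_nil orbF.
  split.
    move=> f; rewrite /J /Jset take_size (HN f); split => HH; apply: (supp_sub HH) => a b.
      by case/orP => [/HMN // | ]; rewrite HD /= => /andP [].
    move=> Hab; case HXM: (XM a b) => //=; by rewrite HD /= Hab HXM.
  split; first by move=> k _; exact: HJ.
  move=> k Hk; split.
    move=> f HH; apply: (supp_sub HH) => a b; rewrite /Jset => /orP [->//|H]; apply/orP; right.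
    have HH2 := mem_take H; move: H; rewrite !in_take //; lia.
  set p := nth (0%N, 0%N) D k.
  have pD : p \in D by rewrite mem_nth.
  have ip : index p D = k by rewrite index_uniq.
  exists (mono p); split.
    move=> a b; rewrite /mono; case: ifP => [/andP [/eqP -> /eqP ->] _ | ]; last by rewrite eqxx.
    by rewrite /Jset -surjective_pairing in_take // ip leqnn orbT.
  move=> H; have := H p.1 p.2; rewrite /mono !eqxx /= oner_neq0 => /(_ isT).
  rewrite /Jset -surjective_pairing in_take // ip ltnn orbF.
  by move: pD; rewrite HD => /andP [_ /negbTE ->].
move=> m J' [H0 [Hm [Hid Hst]]].
have Hnest : forall k t, (k <= t)%N -> (t <= m)%N -> forall f, J' k f -> J' t f.
  move=> k t; elim: t => [|t IH] Hkt Htm f Hf.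
    by move: Hkt; rewrite leqn0 => /eqP <-.
  case: (leqP k t) => Hk.
    apply: (proj1 (Hst t Htm)); apply: IH => //; exact: ltnW.
  by have -> : t.+1 = k by lia.
have HNs : forall t f, (t <= m)%N -> J' t f -> supp f XN.
  move=> t f Ht Hf; apply/HN; apply/Hm; exact: (Hnest t m).
have HMJ : forall t f, (t <= m)%N -> supp f XM -> J' t f.
  move=> t f Ht Hf; apply: (Hnest 0%N t) => //; apply/H0; exact/HM.
have Hx0 : forall k, exists x, (k < m)%N -> J' k.+1 x /\ ~ J' k x.
  move=> k; case: (ltnP k m) => Hk.
    have [_ [x [H1 H2]]] := Hst k Hk; by exists x.
  by exists (@ps0 K).
pose x k := proj1_sig (constructive_indefinite_description _ (Hx0 k)).
have Hx : forall k, (k < m)%N -> J' k.+1 (x k) /\ ~ J' k (x k).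
  move=> k; exact: (proj2_sig (constructive_indefinite_description _ (Hx0 k))).
pose A : 'M[K]_(m, size D) := \matrix_(k < m, i < size D) x k (nth (0%N, 0%N) D i).1 (nth (0%N, 0%N) D i).2.
have core : forall t, (t <= m)%N -> forall u : 'rV[K]_m,
    (forall k : 'I_m, (t <= k)%N -> u 0 k = 0) -> u *m A = 0 -> u = 0.
  elim => [|t IH] Ht u Hu HuA.
    apply/matrixP => i k; by rewrite [i]ord1 Hu // mxE.
  case Eut: (u 0 (Ordinal Ht) == 0).
    apply: (IH (ltnW Ht) u _ HuA) => k Hk.
    case: (eqVneq (k : nat) t) => [Ek|Nk].
      have -> : k = Ordinal Ht by apply: val_inj.
      exact/eqP.
    apply: Hu; lia.
  exfalso.
  set ut := u 0 (Ordinal Ht).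
  pose g := \big[@psadd K/@ps0 K]_(k < m) psmul (cst (u 0 k)) (x k).
  pose h := \big[@psadd K/@ps0 K]_(k < m) psmul (cst (if (k < t)%N then u 0 k else 0)) (x k).
  have Hg : forall a b, g a b = \sum_(k < m) u 0 k * x k a b.
    by move=> a b; rewrite /g bigps_eval; apply: eq_bigr => k _; rewrite psmul_cst.
  have Hh : forall a b, h a b = \sum_(k < m) (if (k < t)%N then u 0 k else 0) * x k a b.
    by move=> a b; rewrite /h bigps_eval; apply: eq_bigr => k _; rewrite psmul_cst.
  have gJ : J' t.+1 g.
    apply: (isIdeal_big _ (Hid t.+1 Ht)) => k _.
    case: (leqP k t) => Hk.
      apply: (Hid t.+1 Ht).2.2.2; first exact: cst_inA.
      apply: (Hnest k.+1 t.+1) => //; exact: (Hx k (ltn_ord k)).1.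
    rewrite Hu // cst0 psmul0l; exact: (Hid t.+1 Ht).2.1.
  have gM : supp g XM.
    move=> a b Hab; have := HNs t.+1 g Ht gJ a b Hab.
    case HXM: (XM a b) => // HXN; exfalso.
    have Hin : (a, b) \in D by rewrite HD /= HXN HXM.
    have Hi : (index (a, b) D < size D)%N by rewrite index_mem.
    move/eqP: Hab; apply.
    have E := congr1 (fun B : 'M[K]_(1, size D) => B 0 (Ordinal Hi)) HuA.
    rewrite /= !mxE in E; rewrite Hg; rewrite -{}[RHS]E.
    apply: eq_bigr => k _; rewrite /A mxE /= nth_index //.
  have gJt : J' t g by apply: HMJ => //; exact: ltnW.
  have hJt : J' t h.
    apply: (isIdeal_big _ (Hid t (ltnW Ht))) => k _.
    case: (ltnP k t) => Hk.
      apply: (Hid t (ltnW Ht)).2.2.2; first exact: cst_inA.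
      apply: (Hnest k.+1 t) => //; first exact: ltnW.
      exact: (Hx k (ltn_ord k)).1.
    rewrite cst0 psmul0l; exact: (Hid t (ltnW Ht)).2.1.
  have Hopp : psopp h = psmul (cst (-1)) h.
    apply: functional_extensionality => a; apply: functional_extensionality => b.
    by rewrite psmul_cst /psopp mulN1r.
  have xt : x t = psmul (cst ut^-1) (psadd g (psopp h)).
    apply: functional_extensionality => a; apply: functional_extensionality => b.
    rewrite psmul_cst /psadd /psopp Hg Hh -sumrB.
    rewrite (_ : \sum_(i < m) _ = \sum_(k < m) (if (k == t :> nat) then ut * x t a b else 0)).
      rewrite (@sum_delta K m t (fun _ => ut * x t a b)) Ht mulrA mulVf ?mul1r //.
      by rewrite Eut.
    apply: eq_bigr => k _.
    case: (ltngtP k t) => Hk.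
    - by rewrite subrr.
    - by rewrite Hu ?mul0r ?subr0 //; lia.
    - have -> : k = Ordinal Ht by apply: val_inj.
      by rewrite /= mul0r subr0.
  apply: (Hx t Ht).2; rewrite xt.
  apply: (Hid t (ltnW Ht)).2.2.2; first exact: cst_inA.
  apply: (Hid t (ltnW Ht)).2.2.1 => //; rewrite Hopp.
  apply: (Hid t (ltnW Ht)).2.2.2 => //; exact: cst_inA.
have Hinj : forall u : 'rV[K]_m, u *m A = 0 -> u = 0.
  move=> u; apply: (core m (leqnn m)) => k Hk; move: (ltn_ord k); lia.
have : kermx A == 0.
  rewrite -submx0; apply/row_subP => i.
  have : row i (kermx A) *m A = 0 by apply/sub_kermxP; exact: row_sub.
  move/Hinj => ->; exact: sub0mx.
rewrite kermx_eq0 /row_free => /eqP <-; exact: rank_leq_col.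
Qed.

End Len.


Section Inst.
Variable K : fieldType.
Variable s : nat.
Hypothesis hs : (0 < s)%N.

Lemma ordered_const c (D : seq (nat * nat)) : (forall p, p \in D -> p.1 = c) -> ordered D.
Proof. move=> H x y /H -> /H ->; by rewrite ltnn. Qed.

Lemma ordered_cat D1 D2 : ordered D1 -> ordered D2 ->
  (forall x y, x \in D1 -> y \in D2 -> (y.1 < x.1)%N) -> ordered (D1 ++ D2).
Proof.
move=> H1 H2 H12 x y; rewrite !mem_cat !index_cat => Hx Hy Hxy.
case Ey: (y \in D1); case Ex: (x \in D1).
- by apply: H1.
- have := index_mem y D1; rewrite Ey => ?; lia.
- move: Hy; rewrite Ey /= => Hy; have := H12 x y Ex Hy; lia.
- move: Hx Hy; rewrite Ex Ey /= => Hx Hy; have := H2 x y Hx Hy Hxy; lia.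
Qed.

Definition D2 : seq (nat * nat) := [seq (2%N, (s.+1 + i)%N) | i <- iota 0 s].

Lemma lenA_a2 : lenA s (prodI (Qid K s) (Iid K s)) (powI s (Iid K s) 2) s.
Proof.
have E : size D2 = s by rewrite size_map size_iota.
rewrite -[X in lenA _ _ _ X]E.
apply: (lenA_mono (XM := MonQI s) (XN := Mon s 2)).
- exact: QI_char.
- exact: powI_char.
- exact: Mon_Sb.
- rewrite /MonQI /Mon; nia.
- rewrite /MonQI /Sb; nia.
- move=> a b a' b' H1 H2; rewrite -(addn0 2%N); apply: MonD => //; by rewrite Mon0.
- rewrite map_inj_uniq ?iota_uniq // => i j [] ?; lia.
- case=> a b /=; apply/idP/idP.
    move/mapP => [i]; rewrite mem_iota => Hi [-> ->]; rewrite /Mon /MonQI; nia.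
  rewrite /Mon /MonQI => H; apply/mapP; exists (b - s.+1)%N; first by rewrite mem_iota; nia.
  congr pair; nia.
- apply: (ordered_const (c := 2%N)) => p /mapP [i _ ->] //.
Qed.

Fixpoint blocks (a : nat) : seq (nat * nat) :=
  match a with
  | 0%N => [:: (0%N, 0%N)]
  | a'.+1 => [seq (a'.+1, b) | b <- iota 0 ((2*s+1)*a'.+1).+1] ++ blocks a'
  end.

Lemma blocksS a : blocks a.+1 = [seq (a.+1, b) | b <- iota 0 ((2*s+1)*a.+1).+1] ++ blocks a.
Proof. by []. Qed.

Lemma mem_blocks a p : (p \in blocks a) = (p.1 <= a)%N && (p.2 <= (2*s+1) * p.1)%N.
Proof.
case: p => x y /=; elim: a => [|a IH].
  rewrite /=.
  rewrite in_cons in_nil orbF; apply/idP/idP; [move/eqP => [-> ->] // | move/andP => [H1 H2]; apply/eqP; congr pair; nia].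
rewrite (_ : blocks a.+1 = [seq (a.+1, b) | b <- iota 0 ((2*s+1)*a.+1).+1] ++ blocks a) // mem_cat IH; apply/idP/idP.
  case/orP => [/mapP [b]|]; [rewrite mem_iota => Hb [-> ->] | ]; nia.
case: (eqVneq x a.+1) => [->|Nx] H.
  apply/orP; left; apply/mapP; exists y => //; rewrite mem_iota; nia.
apply/orP; right; nia.
Qed.

Lemma uniq_blocks a : uniq (blocks a).
Proof.
elim: a => [|a IH] //; rewrite blocksS cat_uniq IH andbT.
apply/andP; split.
  rewrite map_inj_uniq ?iota_uniq // => i j [] -> //.
apply/hasPn => p; rewrite mem_blocks => /andP [Hp _].
apply/negP => /mapP [b _ Eb]; move: Hp; rewrite Eb /=; lia.
Qed.

Lemma ordered_blocks a : ordered (blocks a).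
Proof.
elim: a => [|a IH].
  by apply: (ordered_const (c := 0%N)) => p; rewrite in_cons in_nil orbF => /eqP ->.
rewrite blocksS; apply: ordered_cat => //.
  by apply: (ordered_const (c := a.+1)) => p /mapP [b _ ->].
move=> x y /mapP [b _ ->]; rewrite mem_blocks /= => /andP [H _]; lia.
Qed.

Lemma size_blocks a : (size (blocks a) + s + 2*s*a.+1 = (2*s+1)*'C(a.+2, 2) + s)%N.
Proof.
elim: a => [|a IH].
  rewrite /= binn; lia.
rewrite blocksS size_cat size_map size_iota binS bin1; lia.
Qed.

Definition Dc (n : nat) : seq (nat * nat) :=
  [seq (n.+1, ((2*s+1)*n.+1 - s + i)%N) | i <- iota 0 s] ++ blocks n.

Lemma lenA_c n : lenA s (powI s (Iid K s) n.+1) (inA s)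
       ((2 * s + 1) * 'C(n.+2, 2) - 2 * s * 'C(n.+1, 1) + s)%N.
Proof.
have -> : ((2 * s + 1) * 'C(n.+2, 2) - 2 * s * 'C(n.+1, 1) + s)%N = size (Dc n).
  rewrite size_cat size_map size_iota bin1; have := size_blocks n; lia.
apply: (lenA_mono (XM := Mon s n.+1) (XN := Sb s)).
- exact: powI_char.
- exact: inA_iff.
- by [].
- exact: Mon_Sb.
- move=> a b a' b' H1 H2; rewrite -(addn0 n.+1); apply: MonD => //; by rewrite Mon0.
- rewrite /Sb; nia.
- rewrite /Dc cat_uniq uniq_blocks andbT; apply/andP; split.
    rewrite map_inj_uniq ?iota_uniq // => i j [] ?; lia.
  apply/hasPn => p; rewrite mem_blocks => /andP [Hp _].
  apply/negP => /mapP [b _ Eb]; move: Hp; rewrite Eb /=; lia.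
- case=> a b; rewrite /Dc mem_cat mem_blocks /=; apply/idP/idP.
    case/orP => [/mapP [i]|]; [rewrite mem_iota => Hi [-> ->] | ]; rewrite /Sb /Mon; nia.
  rewrite /Sb /Mon => H; case: (leqP a n) => Ha.
    apply/orP; right; nia.
  apply/orP; left; apply/mapP; exists (b - ((2*s+1)*n.+1 - s))%N.
    rewrite mem_iota; nia.
  congr pair; nia.
- apply: ordered_cat.
  + by apply: (ordered_const (c := n.+1)) => p /mapP [b _ ->].
  + exact: ordered_blocks.
  + move=> x y /mapP [b _ ->]; rewrite mem_blocks /= => /andP [H _]; lia.
Qed.

End Inst.


Section GLaws.
Variable K : fieldType.
Implicit Types g h : grr K.

Lemma gmul_eval g h n a b : gmul g h n a b = \sum_(i < n.+1) psmul (g i) (h (n - i)%N) a b.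
Proof. by rewrite /gmul bigps_eval. Qed.

Definition fp3 (p : {poly {poly {poly K}}}) : grr K := fun n a b => p`_n`_a`_b.
Definition tr3 (N : nat) g : {poly {poly {poly K}}} :=
  \poly_(n < N) \poly_(a < N) \poly_(b < N) g n a b.

Lemma fp3_tr3 N g n a b : (n < N)%N -> (a < N)%N -> (b < N)%N -> fp3 (tr3 N g) n a b = g n a b.
Proof. by move=> H1 H2 H3; rewrite /fp3 /tr3 coef_poly H1 coef_poly H2 coef_poly H3. Qed.

Lemma gmul_fp3 p q : gmul (fp3 p) (fp3 q) = fp3 (p * q).
Proof.
apply: functional_extensionality => n; apply: functional_extensionality => a;
  apply: functional_extensionality => b.
rewrite gmul_eval /fp3 coefM coef_sum coef_sum; apply: eq_bigr => i _.
by rewrite (_ : (fun a b => p`_i`_a`_b) = fp (p`_i)) // (_ : (fun a b => q`_(n - i)`_a`_b) = fp (q`_(n - i)))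
  // psmul_fp.
Qed.

Lemma gmul_ext g h g' h' n a b :
  (forall i a' b', (i <= n)%N -> (a' <= a)%N -> (b' <= b)%N -> g i a' b' = g' i a' b' /\ h i a' b' = h' i a' b') ->
  gmul g h n a b = gmul g' h' n a b.
Proof.
move=> H; rewrite !gmul_eval; apply: eq_bigr => i _; apply: psmul_ext => i' j' Hi Hj.
have Hi0 := ltn_ord i.
split; [apply: (H i i' j' _ _ _).1 | apply: (H (n - i)%N i' j' _ _ _).2]; lia.
Qed.

Lemma gmulC g h : gmul g h = gmul h g.
Proof.
apply: functional_extensionality => n; apply: functional_extensionality => a;
  apply: functional_extensionality => b.
pose N := (maxn n (maxn a b)).+1.
rewrite (@gmul_ext g h (fp3 (tr3 N g)) (fp3 (tr3 N h))); last first.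
  by move=> i a' b' Hi Ha Hb; rewrite !fp3_tr3 //; lia.
rewrite [RHS](@gmul_ext h g (fp3 (tr3 N h)) (fp3 (tr3 N g))); last first.
  by move=> i a' b' Hi Ha Hb; rewrite !fp3_tr3 //; lia.
by rewrite !gmul_fp3 mulrC.
Qed.

Lemma gmulA g h k : gmul g (gmul h k) = gmul (gmul g h) k.
Proof.
apply: functional_extensionality => n; apply: functional_extensionality => a;
  apply: functional_extensionality => b.
pose N := (maxn n (maxn a b)).+1.
have E1 : forall i a' b', (i <= n)%N -> (a' <= a)%N -> (b' <= b)%N ->
   gmul h k i a' b' = gmul (fp3 (tr3 N h)) (fp3 (tr3 N k)) i a' b'.
  move=> i a' b' Hi Ha Hb; apply: gmul_ext => i2 a2 b2 ? ? ?; rewrite !fp3_tr3 //; lia.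
have E2 : forall i a' b', (i <= n)%N -> (a' <= a)%N -> (b' <= b)%N ->
   gmul g h i a' b' = gmul (fp3 (tr3 N g)) (fp3 (tr3 N h)) i a' b'.
  move=> i a' b' Hi Ha Hb; apply: gmul_ext => i2 a2 b2 ? ? ?; rewrite !fp3_tr3 //; lia.
rewrite (@gmul_ext g (gmul h k) (fp3 (tr3 N g)) (gmul (fp3 (tr3 N h)) (fp3 (tr3 N k)))); last first.
  move=> i a' b' Hi Ha Hb; rewrite fp3_tr3 ?E1 //; lia.
rewrite [RHS](@gmul_ext (gmul g h) k (gmul (fp3 (tr3 N g)) (fp3 (tr3 N h))) (fp3 (tr3 N k))); last first.
  move=> i a' b' Hi Ha Hb; rewrite fp3_tr3 ?E2 //; lia.
by rewrite !gmul_fp3 mulrA.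
Qed.

Definition gsub g h : grr K := fun n => psadd (g n) (psopp (h n)).

Lemma psmulDr (f g h : ps K) : psmul f (psadd g h) = psadd (psmul f g) (psmul f h).
Proof. by rewrite psmulC psmulDl !(psmulC f). Qed.
Lemma psmulNr (f h : ps K) : psmul f (psopp h) = psopp (psmul f h).
Proof. by rewrite psmulC psmulNl psmulC. Qed.

Lemma gmul_sub x g h n a b : gmul x (gsub g h) n a b = gmul x g n a b - gmul x h n a b.
Proof.
rewrite !gmul_eval -sumrB; apply: eq_bigr => i _.
by rewrite /gsub psmulDr psmulNr /psadd /psopp.
Qed.

End GLaws.

Lemma gmulCA (K : fieldType) (g h k : grr K) : gmul g (gmul h k) = gmul h (gmul g k).
Proof. by rewrite gmulA (gmulC g) -gmulA. Qed.


Section GSupp.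
Variable K : fieldType.
Variable s : nat.
Implicit Types g h x y z : grr K.

Definition Gsupp g := forall n, supp (g n) (Mon s n).
Definition geqc g h := forall n a b, ~~ Mon s n.+1 a b -> g n a b = h n a b.

Lemma Mon_mono m t a b : Mon s m a b -> (t <= m)%N -> Mon s t a b.
Proof. rewrite /Mon; nia. Qed.

Lemma gmul_supp_at g h n t :
  (forall i, (i <= n)%N -> exists p q, (t <= p + q)%N /\ supp (g i) (Mon s p) /\ supp (h (n - i)%N) (Mon s q)) ->
  supp (gmul g h n) (Mon s t).
Proof.
move=> H a b; rewrite gmul_eval => /sum_neq0 [i Hi].
have Hin : (i <= n)%N by have := ltn_ord i; lia.
have [p [q [Hpq [Hg Hh]]]] := H i Hin.
have := supp_psmul Hg Hh (fun a1 b1 a2 b2 H1 H2 => MonD H1 H2) Hi.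
move/Mon_mono; apply; exact: Hpq.
Qed.

Lemma Gel_iff g : Gel s (Iid K s) g <->
  Gsupp g /\ exists N, forall n, (N <= n)%N -> supp (g n) (Mon s n.+1).
Proof.
split.
  move=> [H1 [N H2]]; split; first by move=> n; apply/powI_char.
  by exists N => n Hn; apply/powI_char; apply: H2.
move=> [H1 [N H2]]; split; first by move=> n; apply/powI_char.
by exists N => n Hn; apply/powI_char; apply: H2.
Qed.

Lemma diff_supp (u v : ps K) (X : nat -> nat -> bool) :
  (forall a b, ~~ X a b -> u a b = v a b) -> supp (psadd u (psopp v)) X.
Proof.
move=> H a b; rewrite /psadd /psopp; case HX: (X a b) => //.
by rewrite H ?HX // subrr eqxx.
Qed.

Lemma geq_iff g h : Defs.geq s (Iid K s) g h <-> geqc g h.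
Proof.
split.
  move=> H n a b HM; have := proj1 (powI_char _ _ _) (H n) a b.
  rewrite /psadd /psopp => H2; apply/eqP; rewrite -subr_eq0.
  by apply: contraR HM => /H2.
move=> H n; apply/powI_char; exact: diff_supp (H n).
Qed.

Lemma geqc_refl g : geqc g g. Proof. by []. Qed.
Lemma geqc_sym g h : geqc g h -> geqc h g. Proof. by move=> H n a b /H ->. Qed.
Lemma geqc_trans g h k : geqc g h -> geqc h k -> geqc g k.
Proof. by move=> H1 H2 n a b HM; rewrite H1 ?H2. Qed.

Lemma Gsupp_gmul g h : Gsupp g -> Gsupp h -> Gsupp (gmul g h).
Proof.
move=> Hg Hh n; apply: gmul_supp_at => i Hi; exists i, (n - i)%N; split; first lia.
by split; [apply: Hg | apply: Hh].
Qed.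

Lemma Gel_gmul g h : Gel s (Iid K s) g -> Gel s (Iid K s) h -> Gel s (Iid K s) (gmul g h).
Proof.
move=> /Gel_iff [Hg [Ng Hg2]] /Gel_iff [Hh [Nh Hh2]]; apply/Gel_iff; split.
  exact: Gsupp_gmul.
exists (Ng + Nh)%N => n Hn; apply: gmul_supp_at => i Hi.
case: (leqP Ng i) => Hi2.
  exists i.+1, (n - i)%N; split; first lia.
  by split; [apply: Hg2 | apply: Hh].
exists i, (n - i).+1; split; first lia.
by split; [apply: Hg | apply: Hh2; lia].
Qed.

Lemma Gel_gsub g h : Gel s (Iid K s) g -> Gel s (Iid K s) h -> Gel s (Iid K s) (gsub g h).
Proof.
move=> /Gel_iff [Hg [Ng Hg2]] /Gel_iff [Hh [Nh Hh2]]; apply/Gel_iff; split.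
  by move=> n; apply: supp_psadd; [apply: Hg | apply: supp_psopp; apply: Hh].
exists (Ng + Nh)%N => n Hn; apply: supp_psadd; [apply: Hg2 | apply: supp_psopp; apply: Hh2]; lia.
Qed.

Lemma Gel_gadd g h : Gel s (Iid K s) g -> Gel s (Iid K s) h -> Gel s (Iid K s) (gadd g h).
Proof.
move=> /Gel_iff [Hg [Ng Hg2]] /Gel_iff [Hh [Nh Hh2]]; apply/Gel_iff; split.
  by move=> n; apply: supp_psadd; [apply: Hg | apply: Hh].
exists (Ng + Nh)%N => n Hn; apply: supp_psadd; [apply: Hg2 | apply: Hh2]; lia.
Qed.

Lemma Gel_gzero : Gel s (Iid K s) (gzero K).
Proof.
apply/Gel_iff; split; first by move=> n; exact: supp_ps0.
by exists 0%N => n _; exact: supp_ps0.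
Qed.

Lemma Gel_single d (F : ps K) : supp F (Mon s d) ->
  Gel s (Iid K s) (fun n => if (n == d)%N then F else @ps0 K).
Proof.
move=> HF; apply/Gel_iff; split.
  move=> n; case: eqP => [->|_] //; exact: supp_ps0.
exists d.+1 => n Hn; case: eqP => [E|_]; first lia.
exact: supp_ps0.
Qed.

Lemma geqc_congr x g g' : Gsupp x -> geqc g g' -> geqc (gmul x g) (gmul x g').
Proof.
move=> Hx H n a b HM; apply/eqP; rewrite -subr_eq0 -gmul_sub.
apply: contraR HM; apply: gmul_supp_at => i Hi.
exists i, (n - i).+1; split; first lia.
split; first exact: Hx.
exact: diff_supp (H (n - i)%N).
Qed.

End GSupp.


Section Depth.
Variable K : fieldType.
Variable s : nat.
Hypothesis hs : (0 < s)%N.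
Implicit Types g h x y z : grr K.

Definition fG : grr K := fun n => if (n == 1)%N then XY K (2*s+1) else @ps0 K.
Definition wG : grr K := fun n => if (n == 0)%N then XY K (2*s) else @ps0 K.

Lemma gmul_f y n a b : gmul fG y n a b =
  if [&& (0 < n)%N, (0 < a)%N & (2*s+1 <= b)%N] then y n.-1 a.-1 (b - (2*s+1))%N else 0.
Proof.
rewrite gmul_eval.
transitivity (\sum_(i < n.+1) (if (i == 1%N :> nat) then
    psmul (XY K (2*s+1)) (y n.-1) a b else 0)).
  apply: eq_bigr => i _; rewrite /fG; case: eqP => [->|_].
    by rewrite subn1.
  by rewrite psmul0l.
rewrite (@sum_delta K n.+1 1%N (fun _ => psmul (XY K (2*s+1)) (y n.-1) a b)) psmul_XYl.
by case: n => [|n] //=; case: ((0 < a)%N && _).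
Qed.

Lemma gmul_w x n a b : gmul x wG n a b =
  if (0 < a)%N && (2*s <= b)%N then x n a.-1 (b - 2*s)%N else 0.
Proof.
rewrite gmul_eval.
transitivity (\sum_(i < n.+1) (if (i == n :> nat) then psmul (x n) (XY K (2*s)) a b else 0)).
  apply: eq_bigr => i _; have Hi := ltn_ord i; rewrite /wG.
  case: eqP => [E|NE]; case: eqP => [E2|NE2] //.
  - by rewrite E2.
  - lia.
  - lia.
  - by rewrite psmulC psmul0l.
by rewrite (@sum_delta K n.+1 n (fun _ => psmul (x n) (XY K (2*s)) a b)) ltnSn psmul_XY.
Qed.

Lemma f_cancel y z : Gsupp s y -> Gsupp s z -> geqc s (gmul fG y) (gmul fG z) -> geqc s y z.
Proof.
move=> Hy Hz H n a b HM.
case HM2: (Mon s n.+2 a.+1 (b + (2*s+1))%N).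
  case Ey: (y n a b == 0); case Ez: (z n a b == 0).
  - by rewrite (eqP Ey) (eqP Ez).
  - have := Hz n a b (negbT Ez); move: HM HM2; rewrite /Mon; nia.
  - have := Hy n a b (negbT Ey); move: HM HM2; rewrite /Mon; nia.
  - have := Hy n a b (negbT Ey); move: HM HM2; rewrite /Mon; nia.
have := H n.+1 a.+1 (b + (2*s+1))%N (negbT HM2).
by rewrite !gmul_f /= (_ : (2*s+1 <= b + (2*s+1))%N = true) ?addnK //; lia.
Qed.

Definition Dx x : grr K := fun m a b =>
  if Mon s m.+2 a.+1 (b + (2*s+1))%N then 0 else x m.+1 a b.+1.

Lemma D_spec x : Gsupp s x -> x 0%N 0%N 0%N = 0 -> geqc s (gmul x wG) (gmul fG (Dx x)).
Proof.
move=> Hx H0 n a b HM; rewrite gmul_w gmul_f /Dx.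
case: (boolP ((0 < a)%N && (2*s <= b)%N)) => Hab; last first.
  case: ifP => //; move: Hab; lia.
case: (boolP [&& (0 < n)%N, (0 < a)%N & (2*s+1 <= b)%N]) => Hc.
  have -> : Mon s n.-1.+2 a.-1.+1 (b - (2 * s + 1) + (2 * s + 1))%N = Mon s n.+1 a b.
    congr Mon; lia.
  rewrite (negbTE HM); congr x; lia.
case Ex: (x n a.-1 (b - 2*s)%N == 0); first exact/eqP.
have Hm := Hx n _ _ (negbT Ex).
case: (posnP n) => Hn.
  move: Hn Hm HM Hab H0 Ex => ->; rewrite /Mon => Hm HM Hab H0 Ex.
  case: (posnP a.-1) => Ha.
    have Eb : (b - 2*s = 0)%N by nia.
    by move: Ex; rewrite Ha Eb H0 eqxx.
  exfalso; move: HM; nia.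
exfalso; move: Hm HM Hab Hc; rewrite /Mon; nia.
Qed.

Lemma D_Gel x : Gel s (Iid K s) x -> Gel s (Iid K s) (Dx x).
Proof.
move=> /Gel_iff [Hx [N HN]]; apply/Gel_iff; split.
  move=> m a b; rewrite /Dx; case: ifP => _; first by rewrite eqxx.
  move/Hx; rewrite /Mon; nia.
exists N => m Hm a b; rewrite /Dx; case: ifP => HM; first by rewrite eqxx.
move/(HN m.+1 ltac:(lia)); move: HM; rewrite /Mon; nia.
Qed.

End Depth.


Section Depth2.
Variable K : fieldType.
Variable s : nat.
Hypothesis hs : (0 < s)%N.
Implicit Types g h x y z : grr K.
Notation II := (Iid K s).

Lemma gzeroE n a b : gzero K n a b = 0. Proof. by []. Qed.

Lemma genG0_iff (x : nat -> grr K) h : genG s II 0 x h <-> Gel s II h /\ geqc s h (gzero K).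
Proof.
split.
  move=> [Gh [c [_ /geq_iff Hq]]]; split => // n a b HM.
  by rewrite Hq // gsum_eval big_ord0.
move=> [Gh Hq]; split => //; exists (fun _ => gzero K); split => //.
by apply/geq_iff => n a b HM; rewrite Hq // gsum_eval big_ord0.
Qed.

Lemma genG1_iff (x : nat -> grr K) h : genG s II 1 x h <->
  Gel s II h /\ exists c, Gel s II c /\ geqc s h (gmul c (x 0%N)).
Proof.
split.
  move=> [Gh [c [Hc /geq_iff Hq]]]; split => //; exists (c 0%N); split; first exact: Hc.
  by move=> n a b HM; rewrite Hq // gsum_eval big_ord1.
move=> [Gh [c [Hc Hq]]]; split => //; exists (fun _ => c); split => //.
by apply/geq_iff => n a b HM; rewrite Hq // gsum_eval big_ord1.
Qed.

Lemma Gel_fG : Gel s II (fG K s).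
Proof.
apply: Gel_single => a b; rewrite /XY; case: ifP => [/andP [/eqP -> /eqP ->] _|]; last by rewrite eqxx.
rewrite /Mon; lia.
Qed.

Lemma Gel_wG : Gel s II (wG K s).
Proof.
apply: Gel_single => a b; rewrite /XY; case: ifP => [/andP [/eqP -> /eqP ->] _|]; last by rewrite eqxx.
rewrite /Mon; lia.
Qed.

Lemma Gsupp_Gel g : Gel s II g -> Gsupp s g.
Proof. by move/Gel_iff => []. Qed.

Lemma no_reg2 n (x : nat -> grr K) : regG s II n x -> (2 <= n)%N -> False.
Proof.
move=> [Hmax [Hreg _]] Hn.
have [G0 [_ Z0]] := Hmax 0%N ltac:(lia).
have [G1 [_ Z1]] := Hmax 1%N ltac:(lia).
have S0 := Gsupp_Gel G0; have S1 := Gsupp_Gel G1.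
set f := fG K s; set w := wG K s.
have Sf : Gsupp s f := Gsupp_Gel Gel_fG.
set a := Dx s (x 0%N); set bb := Dx s (x 1%N).
have Ga : Gel s II a := D_Gel hs G0.
have Gb : Gel s II bb := D_Gel hs G1.
have Ha : geqc s (gmul (x 0%N) w) (gmul f a) := D_spec hs S0 Z0.
have Hb : geqc s (gmul (x 1%N) w) (gmul f bb) := D_spec hs S1 Z1.
have E1 : geqc s (gmul f (gmul (x 1%N) a)) (gmul f (gmul (x 0%N) bb)).
  rewrite (gmulCA f (x 1%N) a).
  apply: geqc_trans (geqc_congr S1 (geqc_sym Ha)) _.
  rewrite (gmulCA (x 1%N) (x 0%N) w).
  apply: geqc_trans (geqc_congr S0 Hb) _.
  by rewrite (gmulCA (x 0%N) f bb).
have E2 := f_cancel hs (Gsupp_gmul S1 (Gsupp_Gel Ga)) (Gsupp_gmul S0 (Gsupp_Gel Gb)) E1.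
have : genG s II 1 x (gmul (x 1%N) a).
  apply/genG1_iff; split; first exact: Gel_gmul.
  by exists bb; split => //; rewrite (gmulC bb); exact: E2.
move/(Hreg 1%N ltac:(lia) a Ga)/genG1_iff => [_ [c [Gc Hc]]].
have E3 : geqc s (gmul (x 0%N) w) (gmul (x 0%N) (gmul f c)).
  apply: geqc_trans Ha _.
  apply: geqc_trans (geqc_congr Sf Hc) _.
  by rewrite (gmulC c (x 0%N)) (gmulCA f (x 0%N) c).
set y := gsub w (gmul f c).
have Gy : Gel s II y by apply: Gel_gsub; [exact: Gel_wG | exact: Gel_gmul Gel_fG Gc].
have : genG s II 0 x (gmul (x 0%N) y).
  apply/genG0_iff; split; first exact: Gel_gmul.
  move=> m a' b' HM; rewrite gmul_sub gzeroE E3 // subrr //.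
move/(Hreg 0%N ltac:(lia) y Gy)/genG0_iff => [_ Hy].
have HM : ~~ Mon s 1 1 (2*s)%N by rewrite /Mon; lia.
have := Hy 0%N 1%N (2*s)%N HM.
rewrite gzeroE /y /gsub /psadd /psopp gmul_f /= /w /wG /XY !eqxx /= subr0 => /eqP.
by rewrite oner_eq0.
Qed.

Lemma depth_one : depthG s II 1.
Proof.
split.
  exists (fun _ => fG K s); split.
    move=> k _; split; first exact: Gel_fG.
    split; last by [].
    by apply/inA_iff; exact: supp_ps0.
  split.
    move=> k Hk y Gy; have -> : k = 0%N by lia.
    move/genG0_iff => [_ H]; apply/genG0_iff; split => //.
    apply: (f_cancel hs) (Gsupp_Gel Gy) (Gsupp_Gel (@Gel_gzero K s)) _.
    move=> n a b HM; rewrite H // gzeroE gmul_f.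
    by case: ifP.
  move/genG1_iff => [_ [c [Gc Hc]]].
  have HM : ~~ Mon s 1 0 0 by rewrite /Mon; lia.
  have := Hc 0%N 0%N 0%N HM; rewrite gmulC gmul_f /= /gone /ps1 /= => /eqP.
  by rewrite oner_eq0.
move=> n x Hx; case: (leqP n 1) => // Hn.
exfalso; exact: no_reg2 Hx Hn.
Qed.

End Depth2.


Section Primes.
Variable K : fieldType.
Variable s : nat.
Hypothesis hs : (0 < s)%N.
Implicit Types g h x y z : grr K.
Notation II := (Iid K s).

Definition Zs (k n b : nat) : bool :=
  if (k == 0)%N then true else if (k == 1)%N then (b == 0)%N else ((n == 0) && (b == 0))%N.

Definition Pk (k : nat) g : Prop := Gel s II g /\ forall n b, Zs k n b -> g n n b = 0.

Lemma Zdown k n b i j : Zs k n b -> (i <= n)%N -> (j <= b)%N -> Zs k (n - i) (b - j).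
Proof. rewrite /Zs; case: ifP => // _; case: ifP => _; lia. Qed.

Lemma term_zero g h n b i i' j : Gsupp s g -> Gsupp s h -> (i <= n)%N -> (i' <= n)%N -> (i' != i) ->
  g i i' j * h (n - i)%N (n - i')%N (b - j)%N = 0.
Proof.
move=> Hg Hh Hi Hi' Ne.
case E1: (g i i' j == 0); first by rewrite (eqP E1) mul0r.
case E2: (h (n - i)%N (n - i')%N (b - j)%N == 0); first by rewrite (eqP E2) mulr0.
have := Hg i i' j (negbT E1); have := Hh _ _ _ (negbT E2); move: Ne; rewrite /Mon; lia.
Qed.

Lemma diag_formula g h n b : Gsupp s g -> Gsupp s h ->
  gmul g h n n b = \sum_(i < n.+1) \sum_(j < b.+1) g i i j * h (n - i)%N (n - i)%N (b - j)%N.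
Proof.
move=> Hg Hh; rewrite gmul_eval; apply: eq_bigr => i _; have Hi := ltn_ord i.
rewrite /psmul.
transitivity (\sum_(i' < n.+1) (if (i' == i :> nat) then
  \sum_(j < b.+1) g i i j * h (n - i)%N (n - i)%N (b - j)%N else 0)).
  apply: eq_bigr => i' _; have Hi' := ltn_ord i'.
  case: (eqVneq (i' : nat) (i : nat)) => [E|Ne]; first by rewrite E.
  apply: big1 => j _; apply: term_zero => //; lia.
by rewrite (@sum_delta K n.+1 i (fun _ => \sum_(j < b.+1) g i i j * h (n - i)%N (n - i)%N (b - j)%N)) Hi.
Qed.

Lemma diag00 g h : Gsupp s g -> Gsupp s h ->
  gmul g h 0%N 0%N 0%N = g 0%N 0%N 0%N * h 0%N 0%N 0%N.
Proof.
move=> Hg Hh; rewrite diag_formula //.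
rewrite big_ord_recl big_ord0 addr0 big_ord_recl big_ord0 addr0 //.
Qed.

Lemma diag_zero k a g n b : Gsupp s a -> Gsupp s g -> (forall n b, Zs k n b -> g n n b = 0) ->
  Zs k n b -> gmul a g n n b = 0.
Proof.
move=> Ha Hg Hz Hk; rewrite diag_formula //; apply: big1 => i _; apply: big1 => j _.
have Hi := ltn_ord i; have Hj := ltn_ord j.
by rewrite Hz ?mulr0 //; apply: Zdown => //; lia.
Qed.

Definition Psi (N : nat) g : {poly {poly K}} := \poly_(n < N) \poly_(b < N) g n n b.
Definition Psi1 (N : nat) g : {poly K} := \poly_(n < N) g n n 0%N.

Lemma Psi_exact g : Gel s II g -> exists N0, forall N, (N0 <= N)%N ->
  (forall n b, (Psi N g)`_n`_b = g n n b) /\ (forall n, (Psi1 N g)`_n = g n n 0%N).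
Proof.
move=> /Gel_iff [Hg [Ng HN]]; exists (Ng + (2*s+1)*Ng).+1 => N HN0.
have Z : forall n b, (Ng <= n)%N -> g n n b = 0.
  move=> n b Hn; apply/eqP; apply: contraT => /(HN n Hn); rewrite /Mon; lia.
have Z2 : forall n b, (N <= b)%N -> g n n b = 0.
  move=> n b Hb; case: (leqP Ng n) => Hn; first exact: Z.
  apply/eqP; apply: contraT => /(Hg n); rewrite /Mon; nia.
split.
  move=> n b; rewrite /Psi coef_poly; case: (ltnP n N) => Hn; last by rewrite coef0 Z //; lia.
  by rewrite coef_poly; case: (ltnP b N) => Hb //; rewrite Z2.
by move=> n; rewrite /Psi1 coef_poly; case: (ltnP n N) => Hn //; rewrite Z //; lia.
Qed.

Lemma Psi_mul g h : Gel s II g -> Gel s II h -> exists N,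
  Psi N g * Psi N h = Psi N (gmul g h) /\ Psi1 N g * Psi1 N h = Psi1 N (gmul g h) /\
  (forall n b, (Psi N g)`_n`_b = g n n b) /\ (forall n b, (Psi N h)`_n`_b = h n n b) /\
  (forall n b, (Psi N (gmul g h))`_n`_b = gmul g h n n b) /\
  (forall n, (Psi1 N g)`_n = g n n 0%N) /\ (forall n, (Psi1 N h)`_n = h n n 0%N) /\
  (forall n, (Psi1 N (gmul g h))`_n = gmul g h n n 0%N).
Proof.
move=> Gg Gh; have Ggh := Gel_gmul Gg Gh.
have [N1 H1] := Psi_exact Gg; have [N2 H2] := Psi_exact Gh; have [N3 H3] := Psi_exact Ggh.
set N := (N1 + N2 + N3)%N.
have [A1 B1] := H1 N ltac:(lia); have [A2 B2] := H2 N ltac:(lia); have [A3 B3] := H3 N ltac:(lia).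
have Sg := Gsupp_Gel Gg; have Sh := Gsupp_Gel Gh.
exists N; split.
  apply/polyP => n; apply/polyP => b.
  rewrite coefM coef_sum A3 diag_formula //; apply: eq_bigr => i _.
  by rewrite coefM; apply: eq_bigr => j _; rewrite A1 A2.
split.
  apply/polyP => n; rewrite coefM B3 diag_formula //; apply: eq_bigr => i _.
  by rewrite big_ord1 B1 B2.
by do !split.
Qed.

Lemma prime_k g h k : (k <= 2)%N -> Gel s II g -> Gel s II h -> Pk k (gmul g h) -> Pk k g \/ Pk k h.
Proof.
move=> Hk Gg Gh [_ Hz].
have [N [M1 [M2 [A1 [A2 [A3 [B1 [B2 B3]]]]]]]] := Psi_mul Gg Gh.
case: k Hk Hz => [|[|[|k]]] // _ Hz.
- have : Psi N g * Psi N h = 0.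
    rewrite M1; apply/polyP => n; apply/polyP => b; by rewrite A3 Hz // !coef0.
  move/eqP; rewrite mulf_eq0 => /orP [/eqP E|/eqP E]; [left|right]; split => // n b _.
    by rewrite -A1 E !coef0.
  by rewrite -A2 E !coef0.
- have : Psi1 N g * Psi1 N h = 0.
    by rewrite M2; apply/polyP => n; rewrite B3 Hz // coef0.
  move/eqP; rewrite mulf_eq0 => /orP [/eqP E|/eqP E]; [left|right]; split => // n b /eqP ->.
    by rewrite -B1 E coef0.
  by rewrite -B2 E coef0.
- have : g 0%N 0%N 0%N * h 0%N 0%N 0%N = 0.
    by rewrite -(diag00 (Gsupp_Gel Gg) (Gsupp_Gel Gh)) Hz.
  move/eqP; rewrite mulf_eq0 => /orP [/eqP E|/eqP E]; [left|right]; split => // n b /andP [/eqP -> /eqP ->] //.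
Qed.

Lemma prime_Pk k : (k <= 2)%N -> isPrimeG s II (Pk k).
Proof.
move=> Hk; split; last split.
- split; first by move=> g [].
  split.
    move=> g h [Gg Hz] Gh /geq_iff He; split => // n b Z.
    rewrite -He ?Hz //; rewrite /Mon; lia.
  split; first by split; [exact: Gel_gzero | by []].
  split.
    move=> g h [Gg Hg] [Gh Hh]; split; first exact: Gel_gadd.
    by move=> n b Z; rewrite /gadd /psadd Hg ?Hh ?addr0.
  move=> a g Ga [Gg Hg]; split; first exact: Gel_gmul.
  move=> n b Z; apply: (diag_zero (k := k)) => //; exact: Gsupp_Gel.
- move=> [_ H]; have Z : Zs k 0 0 by rewrite /Zs; case: ifP => //; case: ifP.
  have := H 0%N 0%N Z; rewrite /gone /ps1 /= => /eqP; by rewrite oner_eq0.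
- move=> g h Gg Gh; exact: prime_k.
Qed.

Lemma chain2 : chainG s II 2 Pk.
Proof.
split; first by move=> k Hk; exact: prime_Pk.
move=> k Hk; split.
  move=> g [Gg Hz]; split => // n b Z; apply: Hz; move: Z; rewrite /Zs.
  by case: k Hk => [|[|k]] //= _; case/andP => _ ->.
case: k Hk => [|[|k]] // _.
- exists (fun n => if (n == 1)%N then XY K 1 else @ps0 K); split.
    split.
      apply: Gel_single => a b; rewrite /XY; case: ifP => [/andP [/eqP -> /eqP ->] _|]; last by rewrite eqxx.
      rewrite /Mon; lia.
    move=> n b /= /eqP ->; case: eqP => // ->; by rewrite /XY.
  move=> [_ H]; have := H 1%N 1%N isT; rewrite /= /XY /= => /eqP; by rewrite oner_eq0.
- exists (fun n => if (n == 1)%N then XY K 0 else @ps0 K); split.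
    split.
      apply: Gel_single => a b; rewrite /XY; case: ifP => [/andP [/eqP -> /eqP ->] _|]; last by rewrite eqxx.
      rewrite /Mon; lia.
    by move=> n b /= /andP [/eqP -> _].
  move=> [_ H]; have := H 1%N 0%N isT; rewrite /= /XY /= => /eqP; by rewrite oner_eq0.
Qed.

Lemma notCM : ~ CMG s II.
Proof.
move=> [d [[[x Hx] _] [_ Hdim]]].
have := Hdim 2%N Pk chain2 => Hd.
exact: (no_reg2 hs Hx Hd).
Qed.

End Primes.

Close Scope ring_scope.


Theorem mainTheorem11 (K : fieldType) (s : nat) (hs : (0 < s)%N) :
  let I := Iid K s in
  let Q := Qid K s in
  (* (a) *)
  ((forall f, powI s I 2 f -> Q f) /\
   lenA s (prodI Q I) (powI s I 2) s /\
   ~ CMG s I) /\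
  (* (b) *)
  (forall f, powI s I 3 f <-> prodI Q (powI s I 2) f) /\
  (* (c) *)
  (forall n : nat,
     lenA s (powI s I n.+1) (inA s)
       ((2 * s + 1) * 'C(n.+2, 2) - 2 * s * 'C(n.+1, 1) + s)%N) /\
  (* (d) *)
  depthG s I 1.
Proof.
move=> I Q; rewrite /I /Q.
split; [split; [|split] | split; [|split]].
- move=> f /powI_char H; apply/Q_char; apply: (supp_sub H) => a b; rewrite /Mon /MonQ; nia.
- exact: lenA_a2.
- exact: notCM hs.
- move=> f; split => H.
    by apply/QI2_char; apply/powI_char.
  by apply/powI_char; apply/QI2_char.
- exact: lenA_c.
- exact: depth_one.
Qed.
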